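(* Let $f:\mathcal{X}\to\Delta^{k-1}$ be a classifier outputting confidence vectors, let $x^{(1)},\dots,x^{(n)}\in\mathcal{X}$, let $f_\# P(c)=\frac1n\sum_{i=1}^n\delta_{f(x^{(i)})}$, and let $P_{\mathrm{pseudo}}(y)=\frac1n\sum_{i=1}^n\delta_{y^{(i)}}$ where $y^{(i)}$ is the one-hot vector with $y^{(i)}_j=\mathbb{1}[j=\arg\max_{j'}f_{j'}(x^{(i)})]$. Then for every probability distribution $P'(y)$ supported on the set of one-hot vectors $\{0,1\}^k\cap\Delta^{k-1}$, $$W_\infty\bigl(f_\# P(c),P'(y)\bigr)\ \ge\ W_\infty\bigl(f_\# P(c),P_{\mathrm{pseudo}}(y)\bigr).$$
   Context: $\Delta^{k-1}=\{c\in\mathbb{R}^k: c_j\ge 0,\ \sum_j c_j=1\}$. For probability distributions $P,Q$ on $\mathbb{R}^k$, $W_\infty(P,Q)=\inf_{\pi\in\Pi(P,Q)}\int\|u-v\|_\infty\,d\pi(u,v)$ over couplings $\pi$ of $P$ and $Q$ (optimal transport distance with ground cost $\|u-v\|_\infty$). Ties in $\arg\max$ are broken by a fixed rule (e.g. smallest index). *)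

(* Defs.v *)
From mathcomp Require Import all_boot all_order all_algebra.
From mathcomp Require Import boolp classical_sets reals.
Set Implicit Arguments. Unset Strict Implicit. Unset Printing Implicit Defensive.
Import Order.TTheory GRing.Theory Num.Theory.
Local Open Scope ring_scope.

Section Defs.
Variables (R : realType) (k : nat).

Definition pt := 'rV[R]_k.

Definition supnorm (u : pt) : R := \big[Num.max/0]_(j < k) `|u ord0 j|.

Definition in_simplex (c : pt) : Prop :=
  (forall j, 0 <= c ord0 j) /\ \sum_(j < k) c ord0 j = 1.

Definition onehot (y : pt) : Prop :=
  (forall j, y ord0 j = 0 \/ y ord0 j = 1) /\ \sum_(j < k) y ord0 j = 1.

(* one-hot encoding of argmax_j c_j, ties broken by the smallest index *)
Definition is_argmax (c : pt) (j : 'I_k) : bool :=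
  [forall j' : 'I_k, c ord0 j' <= c ord0 j] &&
  [forall j' : 'I_k, (j' < j)%N ==> (c ord0 j' < c ord0 j)].
Definition pseudo_label (c : pt) : pt :=
  \row_(j < k) (if is_argmax c j then 1 else 0).

(* A finitely supported measure  sum_a a.1 * delta_{a.2}  on a type T,
   represented by a finite list of (weight, atom). *)
Definition mass {T : eqType} (L : seq (R * T)) (z : T) : R :=
  \sum_(a <- L | a.2 == z) a.1.
Definition is_prob {T : eqType} (L : seq (R * T)) : Prop :=
  (forall a, a \in L -> 0 <= a.1) /\ \sum_(a <- L) a.1 = 1.

(* couplings of P and Q (discrete, since P and Q are finitely supported) *)
Definition coupling (P Q : seq (R * pt)) (pi : seq (R * (pt * pt))) : Prop :=
  (forall a, a \in pi -> 0 <= a.1) /\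
  (forall z, \sum_(a <- pi | a.2.1 == z) a.1 = mass P z) /\
  (forall z, \sum_(a <- pi | a.2.2 == z) a.1 = mass Q z).

Definition cost (pi : seq (R * (pt * pt))) : R :=
  \sum_(a <- pi) a.1 * supnorm (a.2.1 - a.2.2).

Definition Winf (P Q : seq (R * pt)) : R :=
  inf [set c | exists pi, coupling P Q pi /\ c = cost pi].

Definition empirical (n : nat) (g : 'I_n -> pt) : seq (R * pt) :=
  [seq (n%:R^-1, g i) | i <- enum 'I_n].

End Defs.

(* Main.v *)
Require Import Defs.
From mathcomp Require Import all_boot all_order all_algebra.
From mathcomp Require Import boolp classical_sets reals.
Import Order.TTheory GRing.Theory Num.Theory.
Local Open Scope ring_scope.

Section K.
Variables (R : realType) (k : nat).

Lemma le_supnorm (u : 'rV[R]_k) j : `|u ord0 j| <= supnorm u.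
Proof. by rewrite /supnorm (bigD1 j) //= le_max lexx. Qed.

Lemma supnorm_le (u : 'rV[R]_k) L : 0 <= L -> (forall j, `|u ord0 j| <= L) -> supnorm u <= L.
Proof. by move=> L0 H; rewrite /supnorm; apply: bigmax_le. Qed.

Lemma supnorm_ge0 (u : 'rV[R]_k) : 0 <= supnorm u.
Proof. rewrite /supnorm; elim/big_ind: _ => //= x y; rewrite le_max => -> //. Qed.

Lemma onehot_ex (y : 'rV[R]_k) : onehot y ->
  exists m, y ord0 m = 1 /\ forall i, i != m -> y ord0 i = 0.
Proof.
case=> y01 ys.
have [m ym] : exists m, y ord0 m = 1.
  apply/not_existsP => H.
  have : \sum_(j < k) y ord0 j = 0.
    by apply: big1 => j _; case: (y01 j) => // /H.
  by rewrite ys; move/eqP; rewrite oner_eq0.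
exists m; split => // i im.
have y0 : forall j, 0 <= y ord0 j by move=> j; case: (y01 j) => ->.
have : \sum_(j < k | j != m) y ord0 j = 0.
  by move: ys; rewrite (bigD1 m) //= ym => /eqP; rewrite -{2}(addr0 1) => /eqP /addrI.
by move/psumr_eq0P => /(_ (fun j _ => y0 j)); apply.
Qed.

Lemma key (c y : 'rV[R]_k) : in_simplex c -> onehot y ->
  supnorm (c - pseudo_label c) <= supnorm (c - y).
Proof.
move=> [c0 cs] hy; have [m [ym yo]] := onehot_ex y hy.
have c1 : forall i, c ord0 i <= 1.
  move=> i; rewrite -cs (bigD1 i) //= lerDl; exact: sumr_ge0.
set L := supnorm (c - y).
have HL : forall i, `|c ord0 i - y ord0 i| <= L.
  by move=> i; have := le_supnorm (c - y) i; rewrite !mxE.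
apply: supnorm_le; first exact: supnorm_ge0.
move=> i; rewrite !mxE.
case: ifP => ha.
- move: ha => /andP [/forallP hmax _].
  have := HL m; rewrite ym => h; apply: le_trans h.
  rewrite distrC ger0_norm ?subr_ge0 // distrC ger0_norm ?subr_ge0 // lerD2l lerN2.
  exact: hmax.
- rewrite subr0 ger0_norm //.
  have [j' [ji cj]] : exists j', j' != i /\ c ord0 i <= c ord0 j'.
    move: ha => /negbT; rewrite negb_and => /orP [/forallPn [j' hj']|/forallPn [j' hj']].
    + exists j'; rewrite -ltNge in hj'; split; last exact: ltW.
      by apply/eqP => e; move: hj'; rewrite e ltxx.
    + move: hj'; rewrite negb_imply => /andP [lt /negbTE hn].
      exists j'; split; first by apply/eqP => e; rewrite e ltnn in lt.
      by rewrite leNgt hn.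
  case: (eqVneq i m) => [eim|nim].
  + have := HL j'; rewrite yo ?subr0 ?ger0_norm //; last by rewrite -eim.
    exact: le_trans.
  + by have := HL i; rewrite yo // subr0 ger0_norm.
Qed.
End K.

Section G.
Variable R : realType.

Lemma single (T : eqType) (S : seq T) (x : T) (F : T -> R) :
  uniq S -> x \in S -> \sum_(z <- S | x == z) F z = F x.
Proof.
move=> uS xS; rewrite -big_filter.
have -> : [seq z <- S | x == z] = [seq z <- S | pred1 x z].
  by apply: eq_filter => z /=; rewrite eq_sym.
by rewrite filter_pred1_uniq // big_seq1.
Qed.

Lemma regroup (T I : eqType) (r : seq I) (w : I -> R) (p : I -> T) (S : seq T) (G : T -> R) :
  uniq S -> (forall i, i \in r -> w i != 0 -> p i \in S) ->
  \sum_(i <- r) w i * G (p i) = \sum_(z <- S) (\sum_(i <- r | p i == z) w i) * G z.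
Proof.
move=> uS hS.
under [RHS]eq_bigr => z _ do rewrite mulr_suml big_mkcond /=.
rewrite exchange_big /= big_seq [RHS]big_seq; apply: eq_bigr => i ir.
rewrite -big_mkcond /=.
have [w0|wn0] := eqVneq (w i) 0.
  by rewrite w0 mul0r big1 // => z _; rewrite mul0r.
have pS := hS i ir wn0.
rewrite (eq_bigr (fun z => w i * G z)); last by move=> z /eqP <-.
by rewrite single.
Qed.

Lemma prod_coupling (k : nat) (P Q : seq (R * 'rV[R]_k)) : is_prob P -> is_prob Q ->
  coupling P Q [seq (b.1 * a.1, (b.2, a.2)) | b <- P, a <- Q].
Proof.
move=> [P0 P1] [Q0 Q1]; split; last split.
- move=> x /allpairsP [[b a] [/= bP aQ ->]] /=; apply: mulr_ge0; [exact: P0|exact: Q0].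
- move=> z; rewrite big_mkcond big_allpairs_dep /= /mass [RHS]big_mkcond /=.
  apply: eq_bigr => b _; case: ifP => _; last by rewrite big1.
  by rewrite -mulr_sumr Q1 mulr1.
- move=> z; rewrite big_mkcond big_allpairs_dep /= /mass.
  rewrite (eq_bigr (fun b => b.1 * \sum_(a <- Q) (if a.2 == z then a.1 else 0))).
    by rewrite -mulr_suml P1 mul1r -big_mkcond.
  move=> b _; rewrite mulr_sumr; apply: eq_bigr => a _.
  by case: ifP => _; rewrite ?mulr0.
Qed.

End G.

Theorem mainTheorem2 (R : realType) (k n : nat) (X : Type)
  (f : X -> 'rV[R]_k) (hf : forall x, in_simplex (f x))
  (xs : 'I_n -> X) (hn : (0 < n)%N)
  (P' : seq (R * 'rV[R]_k)) (hP' : is_prob P')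
  (hsupp : forall z, ~ onehot z -> mass P' z = 0) :
  Winf (empirical (fun i => f (xs i))) P' >=
  Winf (empirical (fun i => f (xs i)))
       (empirical (fun i => pseudo_label (f (xs i)))).
Proof.
set g := fun i => f (xs i).
set P := empirical g.
set G := fun c : 'rV[R]_k => supnorm (c - pseudo_label c).
set W0 := \sum_(i <- enum 'I_n) n%:R^-1 * G (g i).
have ninv0 : 0 <= n%:R^-1 :> R by rewrite invr_ge0.
have massP : forall z, mass P z = \sum_(i <- enum 'I_n | g i == z) n%:R^-1.
  by move=> z; rewrite /mass /P /empirical big_map.
have hP : is_prob P.
  split; first by move=> a /mapP [i _ ->].
  rewrite /P /empirical big_map big_enum /= sumr_const card_ord.
  by rewrite -[n%:R^-1 *+ n]mulr_natr mulVf // pnatr_eq0 -lt0n.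
have cost_ge0 : forall Q pi, coupling P Q pi -> 0 <= cost pi.
  move=> Q pi [h0 _]; rewrite /cost big_seq; apply: sumr_ge0 => a ha.
  by apply: mulr_ge0; [exact: h0|exact: supnorm_ge0].
have hlb : forall Q, has_lbound [set c | exists pi, coupling P Q pi /\ c = cost pi].
  by move=> Q; exists 0 => c [pi [hpi ->]]; exact: (cost_ge0 Q).
apply: (@le_trans _ _ W0).
  apply: (ge_inf (hlb _)).
  exists [seq (n%:R^-1, (g i, pseudo_label (g i))) | i <- enum 'I_n]; split.
  - split; first by move=> a /mapP [i _ ->].
    by split => z; rewrite /mass /empirical !big_map.
  - by rewrite /cost big_map.
apply: lb_le_inf.
  by exists (cost [seq (b.1 * a.1, (b.2, a.2)) | b <- P, a <- P']),
     [seq (b.1 * a.1, (b.2, a.2)) | b <- P, a <- P']; split => //; exact: prod_coupling.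
move=> c [pi [[h0 [h1 h2]] ->]].
set S := undup [seq g i | i <- enum 'I_n].
have uS : uniq S by exact: undup_uniq.
have nz : forall a, a \in pi -> a.1 != 0 ->
    (exists i, g i = a.2.1) /\ onehot a.2.2.
  move=> a api an0.
  have pos : forall (q : R * ('rV[R]_k * 'rV[R]_k) -> 'rV[R]_k),
      \sum_(b <- pi | q b == q a) b.1 != 0.
    move=> q; rewrite big_seq_cond psumr_eq0; last by move=> b /andP [/h0].
    apply/negP => /allP /(_ a api); rewrite api eqxx /= => /eqP ha.
    by rewrite ha eqxx in an0.
  split.
  - have := pos (fun b => b.2.1); rewrite h1 massP.
    have [//|nex] := pselect (exists i, g i = a.2.1).
    rewrite big1 ?eqxx // => i /eqP gi; exfalso; apply: nex; by exists i.
  - have := pos (fun b => b.2.2); rewrite h2.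
    have [//|no] := pselect (onehot a.2.2).
    by rewrite hsupp // eqxx.
have -> : W0 = \sum_(z <- S) mass P z * G z.
  rewrite /W0 (@regroup R _ _ (enum 'I_n) (fun _ => n%:R^-1) g S G) //.
    by apply: eq_bigr => z _; rewrite massP.
  by move=> i _ _; rewrite mem_undup; apply: map_f; rewrite mem_enum.
have -> : \sum_(z <- S) mass P z * G z = \sum_(a <- pi) a.1 * G a.2.1.
  rewrite (@regroup R _ _ pi (fun a => a.1) (fun a => a.2.1) S G) //.
    by apply: eq_bigr => z _; rewrite h1.
  move=> a api an0; have [[i gi] _] := nz a api an0.
  by rewrite -gi mem_undup; apply: map_f; rewrite mem_enum.
rewrite /cost big_seq [X in _ <= X]big_seq; apply: ler_sum => a api.
have [a0|an0] := eqVneq a.1 0; first by rewrite a0 !mul0r.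
have [[i gi] oh] := nz a api an0.
apply: ler_wpM2l; first exact: h0.
rewrite /G -gi; apply: key => //; exact: hf.
Qed.
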